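(* Let $n\ge 3$ and consider the $C_n$ board (a cycle graph with $n$ vertices and $n$ edges embedded in the plane, with its single bounded cell). Suppose some of its edges are marked with arrows so that no vertex is a sink or a source, and suppose no unmarked edge is markable. Then the number of unmarked (hence unmarkable) edges is even.
   Context: A board is a connected planar graph embedded in the plane together with its bounded cells. Edges may be marked with an arrow pointing in one of the two directions along the edge. A sink is a vertex all of whose incident edges are marked with arrows pointing toward it; a source is a vertex all of whose incident edges are marked with arrows pointing away from it. An unmarked edge is markable if it can be marked with an arrow in at least one direction without creating a sink or a source; an unmarked edge that is not markable is called unmarkable. *)

(* Defs.v *)
(* The C_n board: vertices 'I_n, edges 'I_n; edge e joins
   vertex e and vertex ordS e (= e+1 mod n). *)
From mathcomp Require Import all_boot.
Set Implicit Arguments. Unset Strict Implicit. Unset Printing Implicit Defensive.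

(* A marking: None = unmarked; Some true = arrow from e to e+1;
   Some false = arrow from e+1 to e. *)
Definition marking (n : nat) := 'I_n -> option bool.

Definition incident n (e v : 'I_n) : bool := (e == v) || (ordS e == v).

Definition points_to n (m : marking n) (e v : 'I_n) : bool :=
  match m e with
  | Some true => ordS e == v
  | Some false => e == v
  | None => false
  end.

Definition points_from n (m : marking n) (e v : 'I_n) : bool :=
  match m e with
  | Some true => e == v
  | Some false => ordS e == v
  | None => false
  end.

Definition is_sink n (m : marking n) (v : 'I_n) : Prop :=
  forall e, incident e v -> points_to m e v.

Definition is_source n (m : marking n) (v : 'I_n) : Prop :=
  forall e, incident e v -> points_from m e v.

Definition no_sink_source n (m : marking n) : Prop :=
  forall v, ~ is_sink m v /\ ~ is_source m v.

Definition mark_edge n (m : marking n) (e : 'I_n) (d : bool) : marking n :=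
  fun e' => if e' == e then Some d else m e'.

Definition markable n (m : marking n) (e : 'I_n) : Prop :=
  m e = None /\ exists d : bool, no_sink_source (mark_edge m e d).

(* Main.v *)
Require Import Defs.
From mathcomp Require Import all_boot.
From mathcomp Require Import zify.

Section Aux.
Variable n : nat.
Hypothesis hn : 3 <= n.

Lemma ordS_neq (e : 'I_n) : ordS e != e.
Proof.
apply/eqP => /(congr1 val) /=.
have := ltn_ord e.
case: (ltngtP e.+1 n) => [lt _|//|eq _].
- by rewrite modn_small // => h; lia.
- move=> h; have : (e.+1 %% n = 0) by rewrite eq modnn.
  lia.
Qed.

Local Notation p := (@ord_pred n).

Lemma sinkE (m : marking n) v :
  is_sink m v <-> (m (p v) = Some true /\ m v = Some false).
Proof.
have hpv : p v != v by rewrite -{2}(ord_predK v) eq_sym ordS_neq.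
split.
- move=> H.
  have h1 := H v; have h2 := H (p v).
  rewrite /incident /points_to eqxx /= in h1.
  rewrite /incident /points_to ord_predK eqxx orbT (negbTE hpv) in h2.
  have {h1} := h1 isT; have {h2} := h2 isT.
  case: (m (p v)) => [[]|] //; case: (m v) => [[]|] //.
  by rewrite (negbTE (ordS_neq v)).
- move=> [h1 h2] e; rewrite /incident /points_to.
  case/orP => /eqP E.
  + by subst e; rewrite h2.
  + have -> : e = p v by rewrite -E ordSK.
    by rewrite h1 ord_predK.
Qed.

Lemma sourceE (m : marking n) v :
  is_source m v <-> (m (p v) = Some false /\ m v = Some true).
Proof.
have hpv : p v != v by rewrite -{2}(ord_predK v) eq_sym ordS_neq.
split.
- move=> H.
  have h1 := H v; have h2 := H (p v).
  rewrite /incident /points_from eqxx /= in h1.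
  rewrite /incident /points_from ord_predK eqxx orbT (negbTE hpv) in h2.
  have {h1} := h1 isT; have {h2} := h2 isT.
  case: (m (p v)) => [[]|] //; case: (m v) => [[]|] //.
  by rewrite (negbTE (ordS_neq v)).
- move=> [h1 h2] e; rewrite /incident /points_from.
  case/orP => /eqP E.
  + by subst e; rewrite h2.
  + have -> : e = p v by rewrite -E ordSK.
    by rewrite h1 ord_predK.
Qed.

Lemma nssE (m : marking n) :
  no_sink_source m <-> forall v,
    ~ (m (p v) = Some true /\ m v = Some false) /\
    ~ (m (p v) = Some false /\ m v = Some true).
Proof.
split => H v; have [H1 H2] := H v; split.
- by rewrite -sinkE.
- by rewrite -sourceE.
- by rewrite sinkE.
- by rewrite sourceE.
Qed.

Lemma unmarkable_neighbors (m : marking n) e :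
  no_sink_source m -> m e = None -> ~ markable m e ->
  (m (p e) = Some true /\ m (ordS e) = Some false) \/
  (m (p e) = Some false /\ m (ordS e) = Some true).
Proof.
move=> /nssE Hm He Hnm.
have hpe : p e != e by rewrite -{2}(ord_predK e) eq_sym ordS_neq.
have hSe : ordS e != e by exact: ordS_neq.
have key : forall d, (m (p e) = Some (~~ d) -> False) ->
                     (m (ordS e) = Some (~~ d) -> False) -> markable m e.
  move=> d A B; split => //; exists d; apply/nssE => v.
  rewrite /mark_edge.
  case: (eqVneq v e) => [->|ve].
  - rewrite (negbTE hpe) ?eqxx.
    by case: d A B => A B; split => -[X Y]; try discriminate; apply: A.
  - case: (eqVneq (p v) e) => [pve|pve].
    + have vE : v = ordS e by rewrite -pve ord_predK.
      subst v.
      by case: d A B => A B; split => -[X Y]; try discriminate; apply: B.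
    + by move: (Hm v); rewrite /=.
case E1: (m (p e)) => [[]|]; case E2: (m (ordS e)) => [[]|]; auto;
  exfalso; apply: Hnm.
all: first [ apply: (key true); by rewrite ?E1 ?E2
           | apply: (key false); by rewrite ?E1 ?E2 ].
Qed.

Lemma flips_even (b : 'I_n -> bool) :
  ~~ odd (\sum_(e : 'I_n) (b e != b (ordS e))).
Proof.
have H : \sum_(e : 'I_n) (b e != b (ordS e)) + (\sum_(e : 'I_n) (b e && b (ordS e))).*2
         = (\sum_(e : 'I_n) (b e : nat)).*2.
  have E1 : (\sum_(e : 'I_n) (b e : nat)).*2 = \sum_(e : 'I_n) (b e + b (ordS e)).
    have R : \sum_(e : 'I_n) (b e : nat) = \sum_(e : 'I_n) (b (ordS e) : nat) by exact: (reindex_inj (@ordS_inj n)).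
    rewrite big_split /= -R.
    by rewrite -addnn.
  have E2 : (\sum_(e : 'I_n) (b e && b (ordS e))).*2 = \sum_(e : 'I_n) ((b e && b (ordS e)) + (b e && b (ordS e))).
    by rewrite big_split /= addnn.
  rewrite E1 E2 -big_split /=.
  by apply: eq_bigr => i _; case: (b i); case: (b (ordS i)).
move/(congr1 odd): H; rewrite oddD !odd_double addbF => ->; by [].
Qed.

Definition bval (m : marking n) (e : 'I_n) : bool :=
  match m e with
  | Some d => d
  | None => match m (ordS e) with Some d => d | None => false end
  end.

End Aux.

Theorem lemma4p2 (n : nat) (hn : 3 <= n) (m : marking n) :
  no_sink_source m ->
  (forall e : 'I_n, m e = None -> ~ markable m e) ->
  ~~ odd #|[pred e : 'I_n | m e == None]|.
Proof.
move=> Hm Hu.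
have Hm' := (@nssE n hn m).1 Hm.
have N : forall e, m e = None ->
  (m (ord_pred e) = Some true /\ m (ordS e) = Some false) \/
  (m (ord_pred e) = Some false /\ m (ordS e) = Some true).
  by move=> e He; apply: unmarkable_neighbors => //; apply: Hu.
rewrite -sum1_card big_mkcond /= (reindex_inj (@ordS_inj n)) /=.
have -> : \sum_(e : 'I_n) (if m (ordS e) == None then 1 else 0)
        = \sum_(e : 'I_n) (@bval n m e != @bval n m (ordS e)).
  apply: eq_bigr => e _.
  rewrite /bval.
  have [[h1 h2] [h3 h4]] := (Hm' (ordS e), Hm' (ordS (ordS e))).
  rewrite ordSK in h1 h2.
  rewrite ordSK in h3 h4.
  case Ef: (m (ordS e)) => [y|] /=.
  - case Ee: (m e) => [x|].
    + rewrite Ee Ef in h1 h2.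
      by clear Ee Ef; case: x h1 h2; case: y => h1 h2 //=; [case: h1 | case: h2].
    + by rewrite eqxx.
  - have [[A B]|[A B]] := N _ Ef; rewrite ordSK in A;
    by rewrite A B.
by apply: flips_even.
Qed.
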